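(* Let $$W(t)=\frac{1}{\sqrt{t^2+4t+1}}\begin{pmatrix}-t&2g(t)+1\\2g(t)+1&t\end{pmatrix}\in M_2(\mathbf C[[t]]).$$ Then $W(t)$ is, up to a sign, the unique element of $\mathrm{GL}(2,\mathbf C[[t]])$ such that (i) $W(t)^2=1$; (ii) $W(t)S_0W(t)=S_0^{-1}$; (iii) $W(t)R(t)W(t)=R(t)^{-1}$; (iv) $W(0)=\begin{pmatrix}0&1\\1&0\end{pmatrix}$.
   Context: $\mathbf C[[t]]$ is the ring of formal power series. $g(t)\in\mathbf C[[t]]$ is the power series $\frac{-1+\sqrt{1+4t}}{2}$, i.e. the unique series with zero constant term satisfying $g(t)^2+g(t)=t$; $\sqrt{t^2+4t+1}$ denotes the power series square root with constant term $1$. $S_0=\begin{pmatrix}0&-1\\1&0\end{pmatrix}$ and $R(t)=\begin{pmatrix}g(t)&1+t\\-1&-1-g(t)\end{pmatrix}$. $W(0)$ denotes the matrix of constant terms. *)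

(* Defs.v *)
From mathcomp Require Import all_boot all_algebra.
From mathcomp Require Export complex.
Set Implicit Arguments. Unset Strict Implicit. Unset Printing Implicit Defensive.
Import GRing.Theory.
Local Open Scope ring_scope.

Section FPS.
Variable K : comNzRingType.

(* the ring K[[t]] : f n is the coefficient of t^n *)
Definition fps := nat -> K.

Definition fps_C (c : K) : fps := fun n => if n is 0 then c else 0.
Definition fps_X : fps := fun n => if n == 1%N then 1 else 0.
Definition fps_add (f g : fps) : fps := fun n => f n + g n.
Definition fps_opp (f : fps) : fps := fun n => - f n.
Definition fps_mul (f g : fps) : fps :=
  fun n => \sum_(i < n.+1) f i * g (n - i)%N.

Record mx2 := Mx2 { e11 : fps; e12 : fps; e21 : fps; e22 : fps }.

Definition mx2_mul (A B : mx2) : mx2 :=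
  Mx2 (fps_add (fps_mul (e11 A) (e11 B)) (fps_mul (e12 A) (e21 B)))
      (fps_add (fps_mul (e11 A) (e12 B)) (fps_mul (e12 A) (e22 B)))
      (fps_add (fps_mul (e21 A) (e11 B)) (fps_mul (e22 A) (e21 B)))
      (fps_add (fps_mul (e21 A) (e12 B)) (fps_mul (e22 A) (e22 B))).

Definition mx2_one : mx2 := Mx2 (fps_C 1) (fps_C 0) (fps_C 0) (fps_C 1).
Definition mx2_opp (A : mx2) : mx2 :=
  Mx2 (fps_opp (e11 A)) (fps_opp (e12 A)) (fps_opp (e21 A)) (fps_opp (e22 A)).
Definition mx2_scale (c : fps) (A : mx2) : mx2 :=
  Mx2 (fps_mul c (e11 A)) (fps_mul c (e12 A)) (fps_mul c (e21 A)) (fps_mul c (e22 A)).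

Definition mx2_is_inverse (A B : mx2) : Prop :=
  mx2_mul A B = mx2_one /\ mx2_mul B A = mx2_one.

Definition mx2_GL (A : mx2) : Prop := exists B, mx2_is_inverse A B.

Definition mx2_at0 (A : mx2) : K * K * K * K :=
  (e11 A 0%N, e12 A 0%N, e21 A 0%N, e22 A 0%N).

Definition S0 : mx2 := Mx2 (fps_C 0) (fps_C (-1)) (fps_C 1) (fps_C 0).

Definition Rmx (g : fps) : mx2 :=
  Mx2 g (fps_add (fps_C 1) fps_X) (fps_C (-1)) (fps_add (fps_C (-1)) (fps_opp g)).

Definition lemma7p1_conditions (g : fps) (V : mx2) : Prop :=
  [/\ mx2_GL V,
      mx2_mul V V = mx2_one,
      mx2_is_inverse S0 (mx2_mul V (mx2_mul S0 V)),
      mx2_is_inverse (Rmx g) (mx2_mul V (mx2_mul (Rmx g) V))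
    & mx2_at0 V = (0, 1, 1, 0)].

(* W(t) = u * [[-t, 2g+1],[2g+1, t]]  where u = 1/sqrt(t^2+4t+1) *)
Definition Wmx (g u : fps) : mx2 :=
  let a := fps_add (fps_mul (fps_C 2) g) (fps_C 1) in
  mx2_scale u (Mx2 (fps_opp fps_X) a a fps_X).

End FPS.

(* Main.v *)
From HB Require Import structures.
Require Import Defs.
From mathcomp Require Import all_boot all_algebra.
From mathcomp Require Import complex.
From mathcomp Require Import boolp.
From mathcomp Require Import ring.
Set Implicit Arguments. Unset Strict Implicit. Unset Printing Implicit Defensive.
Import GRing.Theory.
Local Open Scope ring_scope.

Section FpsRing.
Variable K : comNzRingType.
Implicit Types f g h : fps K.

HB.instance Definition _ := gen_eqMixin (fps K).
HB.instance Definition _ := gen_choiceMixin (fps K).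

Lemma fps_addA : associative (@fps_add K).
Proof. by move=> f g h; apply: funext => n; rewrite /fps_add addrA. Qed.
Lemma fps_addC : commutative (@fps_add K).
Proof. by move=> f g; apply: funext => n; rewrite /fps_add addrC. Qed.
Lemma fps_add0 : left_id (fps_C 0) (@fps_add K).
Proof. by move=> f; apply: funext => -[|n]; rewrite /fps_add /= add0r. Qed.
Lemma fps_addN : left_inverse (fps_C 0) (@fps_opp K) (@fps_add K).
Proof. by move=> f; apply: funext => -[|n]; rewrite /fps_add /fps_opp /= addNr. Qed.

HB.instance Definition _ := GRing.isZmodule.Build (fps K) fps_addA fps_addC fps_add0 fps_addN.

Definition T (N : nat) f : {poly K} := \poly_(i < N) f i.

Lemma mulT N f g n : (n < N)%N -> fps_mul f g n = (T N f * T N g)`_n.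
Proof.
move=> nN; rewrite coefM /fps_mul; apply: eq_bigr => i _.
rewrite !coef_poly (leq_ltn_trans (leq_ord i) nN).
by rewrite (leq_ltn_trans (leq_subr i n) nN).
Qed.

Lemma fps_mulA : associative (@fps_mul K).
Proof.
move=> f g h; apply: funext => n.
transitivity ((T n.+1 f * (T n.+1 g * T n.+1 h))`_n).
  rewrite coefM /fps_mul; apply: eq_bigr => i _.
  rewrite -mulT; last by rewrite ltnS leq_subr.
  by rewrite coef_poly (leq_ltn_trans (leq_ord i) (ltnSn n)).
rewrite mulrA coefM /fps_mul; apply: eq_bigr => i _.
rewrite -mulT; last exact: ltn_ord.
by rewrite coef_poly ltnS leq_subr.
Qed.

Lemma fps_mulC : commutative (@fps_mul K).
Proof. by move=> f g; apply: funext => n; rewrite !(@mulT n.+1) // mulrC. Qed.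

Lemma fps_mul1 : left_id (fps_C 1) (@fps_mul K).
Proof.
move=> f; apply: funext => n; rewrite /fps_mul big_ord_recl /= mul1r subn0 big1 ?addr0 //.
by move=> i _; rewrite mul0r.
Qed.

Lemma fps_mulDl : left_distributive (@fps_mul K) (@fps_add K).
Proof.
move=> f g h; apply: funext => n; rewrite /fps_mul /fps_add -big_split /=.
by apply: eq_bigr => i _; rewrite mulrDl.
Qed.

Lemma fps_one_neq0 : fps_C (1 : K) != fps_C 0.
Proof. apply/eqP => /(congr1 (fun f => f 0%N)) /= /eqP; by rewrite oner_eq0. Qed.

HB.instance Definition _ := GRing.Zmodule_isComNzRing.Build (fps K)
  fps_mulA fps_mulC fps_mul1 fps_mulDl fps_one_neq0.

Lemma addE f g : fps_add f g = f + g. Proof. by []. Qed.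
Lemma mulE f g : fps_mul f g = f * g. Proof. by []. Qed.
Lemma oppE f : fps_opp f = - f. Proof. by []. Qed.
Lemma C0E : fps_C (0 : K) = 0. Proof. by []. Qed.
Lemma C1E : fps_C (1 : K) = 1. Proof. by []. Qed.
Lemma CD (a b : K) : fps_C (a + b) = fps_C a + fps_C b.
Proof. rewrite -addE; by apply: funext => -[|n] /=; rewrite /fps_add /= ?addr0. Qed.
Lemma CN (a : K) : fps_C (- a) = - fps_C a.
Proof. rewrite -oppE; by apply: funext => -[|n] /=; rewrite /fps_opp /= ?oppr0. Qed.
Lemma Cnat (m : nat) : fps_C (m%:R : K) = m%:R.
Proof. elim: m => [|m IH]; first by []. by rewrite -addn1 !natrD CD IH. Qed.

Lemma mul0E f g : (f * g) 0%N = f 0%N * g 0%N.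
Proof. by rewrite -mulE /fps_mul big_ord1. Qed.
Lemma add0E f g : (f + g) 0%N = f 0%N + g 0%N. Proof. by []. Qed.
Lemma opp0E f : (- f) 0%N = - f 0%N. Proof. by []. Qed.
Lemma one0E : (1 : fps K) 0%N = 1. Proof. by []. Qed.
Lemma nat0E m : (m%:R : fps K) 0%N = m%:R.
Proof. by rewrite -Cnat. Qed.

End FpsRing.
Ltac fE := rewrite ?addE ?mulE ?oppE ?C0E ?C1E ?CN ?C1E ?Cnat.

Section Mx.
Variable K : comNzRingType.
Implicit Types A B C : mx2 K.

Lemma canc (K' : comUnitRingType) (f h : fps K') : f * h = 0 -> h 0%N \is a GRing.unit -> f = 0.
Proof.
move=> E h0.
have H : forall n m, (m <= n)%N -> f m = 0.
  elim=> [|n IH] m.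
    rewrite leqn0 => /eqP ->.
    have := congr1 (fun k => k 0%N) E; rewrite mul0E /= => /(congr1 (fun x => x * (h 0%N)^-1)).
    by rewrite -mulrA divrr // mulr1 mul0r.
  rewrite leq_eqVlt => /orP [/eqP -> | ]; last by apply: IH.
  have := congr1 (fun k => k n.+1) E; rewrite -mulE /fps_mul big_ord_recr /= subnn.
  rewrite big1 ?add0r; last by move=> i _; rewrite IH ?mul0r // -ltnS.
  move/(congr1 (fun x => x * (h 0%N)^-1)).
  by rewrite -mulrA divrr // mulr1 mul0r.
by apply: funext => n; rewrite (H n n) //; case: n.
Qed.

Lemma mx2_mulA A B C : mx2_mul A (mx2_mul B C) = mx2_mul (mx2_mul A B) C.
Proof. case: A B C => [? ? ? ?] [? ? ? ?] [? ? ? ?]; rewrite /mx2_mul /=; fE; congr Mx2; ring. Qed.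
Lemma mx2_mul1 A : mx2_mul (mx2_one K) A = A.
Proof. case: A => [? ? ? ?]; rewrite /mx2_mul /=; fE; congr Mx2; ring. Qed.
Lemma mx2_mulr1 A : mx2_mul A (mx2_one K) = A.
Proof. case: A => [? ? ? ?]; rewrite /mx2_mul /=; fE; congr Mx2; ring. Qed.
Lemma mulsl c A B : mx2_mul (mx2_scale c A) B = mx2_scale c (mx2_mul A B).
Proof. case: A B => [? ? ? ?] [? ? ? ?]; rewrite /mx2_mul /mx2_scale /=; fE; congr Mx2; ring. Qed.
Lemma mulsr c A B : mx2_mul A (mx2_scale c B) = mx2_scale c (mx2_mul A B).
Proof. case: A B => [? ? ? ?] [? ? ? ?]; rewrite /mx2_mul /mx2_scale /=; fE; congr Mx2; ring. Qed.
Lemma scale_scale c d A : mx2_scale c (mx2_scale d A) = mx2_scale (c * d) A.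
Proof. case: A => [? ? ? ?]; rewrite /mx2_scale /=; fE; congr Mx2; ring. Qed.
Lemma scale1 A : mx2_scale 1 A = A.
Proof. case: A => [? ? ? ?]; rewrite /mx2_scale /=; fE; congr Mx2; ring. Qed.
End Mx.
Import Num.Theory.
Ltac mE := rewrite /mx2_mul /mx2_one /mx2_scale /mx2_opp /S0 /Rmx /=; fE.

Theorem lemma7p1 (R : rcfType) (g s u : fps R[i]) :
  g 0%N = 0 ->
  fps_add (fps_mul g g) g = fps_X R[i] ->
  s 0%N = 1 ->
  fps_mul s s = fps_add (fps_C 1)
                  (fps_add (fps_mul (fps_C 4) (fps_X R[i]))
                           (fps_mul (fps_X R[i]) (fps_X R[i]))) ->
  fps_mul u s = fps_C 1 ->
  lemma7p1_conditions g (Wmx g u) /\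
  (forall V : mx2 R[i], lemma7p1_conditions g V ->
     V = Wmx g u \/ V = mx2_opp (Wmx g u)).
Proof.
move=> g0 Hg s0 Hs Hu; move: Hg Hs Hu; fE => Hg Hs Hu.
set t := fps_X R[i] in Hg Hs *.
set a := 2 * g + 1.
set M := Mx2 (- t) a a t.
have WE : Wmx g u = mx2_scale u M by rewrite /Wmx; fE.
have Ha2 : a * a = 1 + 4 * t by rewrite /a -Hg; ring.
have Huu : u * (u * (s * s)) = 1.
  by transitivity ((u * s) * (u * s)); [ring | rewrite Hu mulr1].
have sc : forall X, mx2_scale u (mx2_scale u (mx2_scale (s * s) X)) = X.
  by move=> X; rewrite !scale_scale -!mulrA Huu scale1.
have WXW : forall X, mx2_mul (mx2_scale u M) (mx2_mul X (mx2_scale u M))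
    = mx2_scale u (mx2_scale u (mx2_mul M (mx2_mul X M))).
  by move=> X; rewrite mulsl !mulsr.
set Ri := Mx2 (-1 - g) (- (1 + t)) 1 g.
have MM : mx2_mul M M = mx2_scale (s * s) (mx2_one _).
  rewrite /M; mE; rewrite -/t Hs -Hg /a; congr Mx2; ring.
have MSM : mx2_mul M (mx2_mul (S0 _) M) = mx2_scale (s * s) (mx2_opp (S0 _)).
  rewrite /M; mE; rewrite -/t Hs -Hg /a; congr Mx2; ring.
have MRM : mx2_mul M (mx2_mul (Rmx g) M) = mx2_scale (s * s) Ri.
  rewrite /M /Ri; mE; rewrite -/t Hs -Hg /a; congr Mx2; ring.
have RRi : mx2_is_inverse (Rmx g) Ri.
  by rewrite /Ri; split; mE; rewrite -/t -Hg; congr Mx2; ring.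
have SSi : mx2_is_inverse (S0 _) (mx2_opp (S0 R[i])).
  by split; mE; congr Mx2; ring.
have u0 : u 0%N = 1.
  by have := congr1 (fun k => k 0%N) Hu; rewrite /= mul0E s0 mulr1.
have a0 : a 0%N = 1 by rewrite /a add0E mul0E g0 mulr0 add0r.
split.
  rewrite WE; split.
  - by exists (mx2_scale u M); split; rewrite mulsl mulsr MM !scale_scale -!mulrA Huu scale1.
  - by rewrite mulsl mulsr MM !scale_scale -!mulrA Huu scale1.
  - by rewrite WXW MSM sc.
  - by rewrite WXW MRM sc.
  by rewrite /mx2_at0 /=; fE; rewrite !mul0E opp0E u0 a0 /= oppr0 !mulr0 mulr1.
move=> [p q r w] [_ HVV [HS1 _] [HR1 _] H0].
have HVVc := HVV; have HR1c := HR1.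
move: H0; rewrite /mx2_at0 /= => -[p0 q0 r0 w0].
have Hmx := fun A B => mx2_mulA A B.
move: HVV HS1; mE; case=> v1 v2 v3 v4; case=> e1 e2 e3 e4.
move: v1 v2 v3 v4 e1 e2 e3 e4; fE => v1 v2 v3 v4 e1 e2 e3 e4.
have unit1 : forall f : fps R[i], f 0%N = 1 -> f 0%N \is a GRing.unit.
  by move=> f ->; rewrite unitr1.
have hw : w = - p.
  have: (p + w) * q = 0 by rewrite -v2; ring.
  move/canc => /(_ (unit1 _ q0)) H.
  by transitivity ((p + w) - p); [ring | rewrite H; ring].
subst w.
have hr : r = q.
  have: (q - r) * q = 0.
    have := congr2 (fun x y => x - y) e4 v1; rewrite /= subrr => <-; ring.
  move/canc => /(_ (unit1 _ q0)) H.
  by transitivity (q - (q - r)); [ring | rewrite H; ring].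
subst r.
set V := Mx2 p q q (- p) in HVVc HR1c *.
have X1 : mx2_mul V (mx2_mul (Rmx g) V) = Ri.
  by rewrite -[LHS]mx2_mul1 -RRi.2 -mx2_mulA HR1c mx2_mulr1.
have X2 : mx2_mul V (Rmx g) = mx2_mul Ri V.
  by rewrite -X1 -mx2_mulA -(mx2_mulA (Rmx g)) HVVc mx2_mulr1.
move: X2; rewrite /V /Ri; mE; rewrite -/t; case=> f1 _ _ _.
move/eqP: f1; rewrite -subr_eq0 => /eqP f1.
have Hap : a * p + t * q = 0 by rewrite -f1 /a; ring.
have two : (s * q + a) 0%N \is a GRing.unit.
  rewrite add0E mul0E s0 q0 a0 mul1r unitfE.
  by rewrite -[1 + 1]/(2%:R : R[i]) pnatr_eq0.
have Hsq : s * q = a.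
  have: (s * q - a) * (s * q + a) = 0.
    transitivity ((1 + 4 * t) * (p * p + q * q - 1) + (t * q - a * p) * (a * p + t * q)).
      have -> : (s * q - a) * (s * q + a) = (s * s) * (q * q) - a * a by ring.
      by rewrite Hs -Hg /a; ring.
    by rewrite v1 Hap; ring.
  move/canc => /(_ two) H.
  by transitivity ((s * q - a) + a); [ring | rewrite H; ring].
have Hq : q = u * a.
  by rewrite -Hsq; transitivity ((u * s) * q); [rewrite Hu; ring | ring].
have Hp : p = - (t * u).
  have: (p + t * u) * a = 0.
    by rewrite -Hap Hq; ring.
  move/canc => /(_ (unit1 _ a0)) H.
  by transitivity ((p + t * u) - t * u); [ring | rewrite H; ring].
left; rewrite WE /M /mx2_scale /V; fE; rewrite Hp Hq; rewrite /=; congr Mx2; ring.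
Qed.
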